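(* For all real $a>0$, $b>0$ and every complex $s$ with $\Re(s)>1$, \[\sum_{k=0}^\infty (-1)^k \zeta(s,ka+b)=(2a)^{-s} \sum_{n=0}^\infty \Big\{\zeta\Big(s,\frac{n+b}{2a}\Big)-\zeta\Big(s,\frac{n+b}{2a}+\frac{1}{2}\Big)\Big\}.\]
   Context: $\zeta(s,\alpha)=\sum_{n=0}^\infty (n+\alpha)^{-s}$ denotes the Hurwitz zeta function ($\Re(s)>1$, $\alpha>0$). *)

(* Defs.v *)
From Stdlib Require Import Reals.
From Coquelicot Require Import Coquelicot.
Open Scope R_scope.

(* x^w for real x > 0 and complex w, principal branch: exp(w * ln x). *)
Definition cpow_pos (x : R) (w : C) : C :=
  (exp (Re w * ln x) * cos (Im w * ln x), exp (Re w * ln x) * sin (Im w * ln x)).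

Definition hurwitz_term (s : C) (alpha : R) (n : nat) : C :=
  cpow_pos (INR n + alpha) (Copp s).

(* Hurwitz zeta zeta(s, alpha) = sum_{n>=0} (n+alpha)^(-s), computed as the
   sum of the real parts and of the imaginary parts (the series converges
   absolutely for Re s > 1, alpha > 0). *)
Definition hurwitz_zeta (s : C) (alpha : R) : C :=
  (Series (fun n => Re (hurwitz_term s alpha n)),
   Series (fun n => Im (hurwitz_term s alpha n))).

(* Main.v *)
Require Import Defs.
From Stdlib Require Import Reals.
From Coquelicot Require Import Coquelicot.
From Stdlib Require Import Lra Lia Psatz.
Open Scope R_scope.

Lemma exp_ge_1p (x : R) : 1 + x <= exp x.
Proof.
  destruct (Req_dec x 0) as [->|H]. rewrite exp_0; lra.
  left; now apply exp_ineq1.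
Qed.

Lemma ln_le_sub1 (r : R) : 0 < r -> ln r <= r - 1.
Proof.
  intros Hr. rewrite <- (ln_exp (r - 1)). apply ln_le; auto.
  pose proof (exp_ge_1p (r-1)); lra.
Qed.

Lemma Rpower_pos (x p : R) : 0 < Rpower x p.
Proof. unfold Rpower; apply exp_pos. Qed.

Lemma Rpower_dec (x y p : R) : 0 < y -> y <= x -> 0 <= p -> Rpower x (-p) <= Rpower y (-p).
Proof.
  intros Hy Hyx Hp. unfold Rpower.
  destruct (Req_dec p 0) as [->|Hp0]. right; f_equal; ring.
  destruct (Rle_lt_or_eq_dec _ _ Hyx) as [Hl|Heq]; [|rewrite Heq; right; reflexivity].
  left. apply exp_increasing. assert (ln y < ln x) by (apply ln_increasing; lra).
  nra.
Qed.

Lemma Rpower_split (x y1 y2 p q : R) : 0 < y1 -> 0 < y2 -> y1 <= x -> y2 <= x ->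
  0 <= p -> 0 <= q -> Rpower x (-(p+q)) <= Rpower y1 (-p) * Rpower y2 (-q).
Proof.
  intros. replace (-(p+q)) with (-p + -q) by ring. rewrite Rpower_plus.
  apply Rmult_le_compat; try (left; apply Rpower_pos); apply Rpower_dec; auto.
Qed.

Lemma tele_ineq (y q : R) : 0 < y -> 1 < q ->
  (q - 1) * Rpower (y + 1) (-q) <= Rpower y (1 - q) - Rpower (y + 1) (1 - q).
Proof.
  intros Hy Hq.
  set (r := y / (y + 1)).
  assert (Hr : 0 < r) by (unfold r; apply Rdiv_lt_0_compat; lra).
  assert (Hyr : y = r * (y + 1)) by (unfold r; field; lra).
  assert (H1r : 1 - r = / (y + 1)) by (unfold r; field; lra).
  assert (E : Rpower y (1 - q) = Rpower r (1 - q) * Rpower (y + 1) (1 - q)).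
  { rewrite Hyr at 1. rewrite Rpower_mult_distr; auto; lra. }
  assert (E2 : Rpower (y + 1) (-q) = / (y + 1) * Rpower (y + 1) (1 - q)).
  { replace (1 - q) with (1 + - q) by ring. rewrite Rpower_plus, Rpower_1 by lra.
    field; lra. }
  assert (Hb : 1 + (q - 1) * (1 - r) <= Rpower r (1 - q)).
  { unfold Rpower. eapply Rle_trans; [|apply exp_ge_1p].
    pose proof (ln_le_sub1 r Hr). nra. }
  rewrite E, E2, <- H1r.
  pose proof (Rpower_pos (y+1) (1-q)). nra.
Qed.

Lemma ex_series_pow (c q : R) : 0 < c -> 1 < q ->
  ex_series (fun n => Rpower (INR n + c) (-q)).
Proof.
  intros Hc Hq.
  set (u := fun n => Rpower (INR n + c) (-q)).
  set (M := Rpower c (-q) + Rpower c (1 - q) / (q - 1)).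
  assert (HP : forall N, sum_n u N <= M - Rpower (INR N + c) (1 - q) / (q - 1)).
  { induction N.
    - rewrite sum_O. unfold u, M. simpl. rewrite Rplus_0_l. lra.
    - rewrite sum_Sn. change (plus (sum_n u N) (u (S N))) with (sum_n u N + u (S N)).
      unfold u at 2. rewrite S_INR.
      pose proof (tele_ineq (INR N + c) q) as T.
      replace (INR N + 1 + c) with (INR N + c + 1) by ring.
      assert (0 < INR N + c) by (pose proof (pos_INR N); lra).
      specialize (T H Hq).
      apply Rle_trans with (M - Rpower (INR N + c) (1 - q) / (q - 1) +
                             Rpower (INR N + c + 1) (- q)).
      lra.
      assert (Rpower (INR N + c + 1) (- q) <=
        (Rpower (INR N + c) (1 - q) - Rpower (INR N + c + 1) (1 - q)) / (q - 1)).
      { apply Rmult_le_reg_l with (q - 1). lra. field_simplify; lra. }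
      unfold Rdiv in *. lra. }
  assert (Hinc : forall n, sum_n u n <= sum_n u (S n)).
  { intros n. rewrite sum_Sn. change (plus (sum_n u n) (u (S n))) with (sum_n u n + u (S n)).
    pose proof (Rpower_pos (INR (S n) + c) (-q)). unfold u; lra. }
  assert (Hb : forall n, sum_n u n <= M).
  { intros n. pose proof (HP n). pose proof (Rpower_pos (INR n + c) (1 - q)).
    assert (0 < Rpower (INR n + c) (1 - q) / (q - 1)) by (apply Rdiv_lt_0_compat; lra).
    lra. }
  destruct (ex_finite_lim_seq_incr _ M Hinc Hb) as [l Hl].
  exists l. exact Hl.
Qed.

Lemma ex_series_pow_lin (d c q : R) : 0 < d -> 0 < c -> 1 < q ->
  ex_series (fun n => Rpower (INR n * d + c) (-q)).
Proof.
  intros Hd Hc Hq.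
  destruct (ex_series_pow (c / d) q) as [l Hl]; auto. apply Rdiv_lt_0_compat; auto.
  exists (@scal R_AbsRing R_NormedModule (Rpower d (-q)) l).
  apply is_series_ext with (fun n => @scal R_AbsRing R_NormedModule (Rpower d (-q)) (Rpower (INR n + c / d) (-q))).
  2: now apply is_series_scal.
  intros n. unfold scal; simpl; unfold mult; simpl.
  rewrite Rpower_mult_distr; auto. f_equal. field. lra.
  pose proof (pos_INR n). assert (0 < c/d) by (apply Rdiv_lt_0_compat; auto). lra.
Qed.


Lemma lim_norm {K : AbsRing} {V : NormedModule K} (f : nat -> V) (l : V) :
  filterlim f eventually (locally l) <->
  forall eps, 0 < eps -> exists N, forall n, (N <= n)%nat -> norm (minus (f n) l) < eps.
Proof.
  split.
  - intros H eps Heps.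
    pose proof (@norm_factor_gt_0 K V) as Hnf.
    assert (He : 0 < eps / @norm_factor K V) by (apply Rdiv_lt_0_compat; auto).
    destruct (proj1 (filterlim_locally f l) H (mkposreal _ He)) as [N HN].
    exists N. intros n Hn. specialize (HN n Hn).
    apply norm_compat2 in HN. simpl in HN.
    replace (@norm_factor K V * (eps / @norm_factor K V)) with eps in HN by (field; lra). exact HN.
  - intros H. apply filterlim_locally. intros eps.
    destruct (H eps (cond_pos eps)) as [N HN]. exists N. intros n Hn.
    apply norm_compat1. now apply HN.
Qed.

Lemma lim_C (f : nat -> C) (l : C) :
  filterlim f eventually (locally l) <->
  forall eps, 0 < eps -> exists N, forall n, (N <= n)%nat -> Cmod (f n - l) < eps.
Proof. apply (lim_norm (K := C_AbsRing) (V := C_NormedModule)). Qed.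

Lemma lim_R (f : nat -> R) (l : R) :
  filterlim f eventually (locally l) <->
  forall eps, 0 < eps -> exists N, forall n, (N <= n)%nat -> Rabs (f n - l) < eps.
Proof. apply (lim_norm (K := R_AbsRing) (V := R_NormedModule)). Qed.

Lemma lim_C_le (f : nat -> C) (l y : C) (r : R) :
  filterlim f eventually (locally l) ->
  (exists N, forall n, (N <= n)%nat -> Cmod (f n - y) <= r) -> Cmod (l - y) <= r.
Proof.
  intros H [N HN]. destruct (Rle_or_lt (Cmod (l - y)) r) as [|Hlt]; auto.
  destruct (proj1 (lim_C f l) H (Cmod (l - y) - r)) as [N2 HN2]. lra.
  set (n := (N + N2)%nat).
  specialize (HN n ltac:(unfold n; lia)). specialize (HN2 n ltac:(unfold n; lia)).
  assert (E : (l - y = - (f n - l) + (f n - y))%C) by ring.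
  pose proof (Cmod_triangle (- (f n - l)) (f n - y)). rewrite Cmod_opp in H0.
  rewrite <- E in H0. lra.
Qed.

Lemma lim_R_le (f : nat -> R) (l r : R) :
  filterlim f eventually (locally l) ->
  (exists N, forall n, (N <= n)%nat -> f n <= r) -> l <= r.
Proof.
  intros H [N HN]. destruct (Rle_or_lt l r) as [|Hlt]; auto.
  destruct (proj1 (lim_R f l) H (l - r)) as [N2 HN2]. lra.
  specialize (HN (N + N2)%nat ltac:(lia)). specialize (HN2 (N + N2)%nat ltac:(lia)).
  apply Rabs_lt_between in HN2. lra.
Qed.

Lemma sum_n_R (u : nat -> R) n : sum_n u (S n) = sum_n u n + u (S n).
Proof. rewrite sum_Sn. reflexivity. Qed.

Lemma sum_n_C (u : nat -> C) n : sum_n u (S n) = (sum_n u n + u (S n))%C.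
Proof. rewrite sum_Sn. reflexivity. Qed.

Lemma lim_R_ge (f : nat -> R) (l r : R) :
  filterlim f eventually (locally l) ->
  (exists N, forall n, (N <= n)%nat -> r <= f n) -> r <= l.
Proof.
  intros H [N HN]. destruct (Rle_or_lt r l) as [|Hlt]; auto.
  destruct (proj1 (lim_R f l) H (r - l)) as [N2 HN2]. lra.
  specialize (HN (N + N2)%nat ltac:(lia)). specialize (HN2 (N + N2)%nat ltac:(lia)).
  apply Rabs_lt_between in HN2. lra.
Qed.

Lemma sum_mono (u : nat -> R) n k :
  (forall k, 0 <= u k) -> (n <= k)%nat -> sum_n u n <= sum_n u k.
Proof.
  intros Hp Hk. induction Hk. lra.
  rewrite sum_n_R. specialize (Hp (S m)). lra.
Qed.

Lemma partial_le (u : nat -> R) (U : R) n :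
  (forall k, 0 <= u k) -> is_series u U -> sum_n u n <= U.
Proof.
  intros Hp HU. apply lim_R_ge with (sum_n u); auto.
  exists n. intros k Hk. now apply sum_mono.
Qed.

Lemma series_ge0 (u : nat -> R) (U : R) :
  (forall k, 0 <= u k) -> is_series u U -> 0 <= U.
Proof.
  intros Hp HU. eapply Rle_trans; [|apply (partial_le u U 0%nat Hp HU)].
  rewrite sum_O. apply Hp.
Qed.

Lemma Cminus0 (x : C) : (x - 0)%C = x.
Proof. ring. Qed.

Lemma snorm_C (w : nat -> C) (l : C) (r : nat -> R) (R0 : R) :
  is_series w l -> is_series r R0 -> (forall n, Cmod (w n) <= r n) -> Cmod l <= R0.
Proof.
  intros Hw Hr Hb.
  assert (Hp : forall k, 0 <= r k) by (intros k; eapply Rle_trans; [apply Cmod_ge_0|apply Hb]).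
  replace l with (l - 0)%C by ring.
  apply lim_C_le with (sum_n w); auto.
  exists 0%nat. intros n _. rewrite Cminus0.
  eapply Rle_trans; [apply (norm_sum_n_m (K:=C_AbsRing) (V:=C_NormedModule) w 0 n)|].
  eapply Rle_trans; [apply sum_n_m_le; intros k; apply Hb|].
  apply partial_le; auto.
Qed.

Lemma tri_half (x y L : C) e : Cmod (x - L) < e/2 -> Cmod (y - 0) < e/2 -> Cmod (x + y - L) < e.
Proof.
  intros H1 H2. replace (x + y - L)%C with ((x - L) + (y - 0))%C by ring.
  eapply Rle_lt_trans; [apply Cmod_triangle|]. lra.
Qed.

Lemma sum_pair (c : nat -> C) J :
  sum_n c (S (2 * J)) = sum_n (fun j => (c (2 * j)%nat + c (S (2 * j)))%C) J.
Proof.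
  induction J.
  - simpl. rewrite sum_n_C, !sum_O. reflexivity.
  - replace (2 * S J)%nat with (S (S (2 * J))) by lia.
    rewrite sum_n_C, sum_n_C, IHJ, sum_n_C.
    replace (2 * S J)%nat with (S (S (2 * J))) by lia. symmetry; apply Cplus_assoc.
Qed.

Lemma pairing (c : nat -> C) (L : C) :
  is_series (fun j => (c (2 * j)%nat + c (S (2 * j)))%C) L ->
  filterlim c eventually (@locally C_UniformSpace (RtoC 0)) ->
  is_series c L.
Proof.
  intros HL Hc. unfold is_series. apply lim_C. intros eps Heps.
  destruct (proj1 (lim_C _ _) HL (eps/2)) as [N1 HN1]. lra.
  destruct (proj1 (lim_C _ _) Hc (eps/2)) as [N2 HN2]. lra.
  exists (S (2 * (N1 + N2))). intros n Hn.
  destruct (Nat.Even_or_Odd n) as [[J HJ]|[J HJ]].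
  - subst n. destruct J as [|J]. lia.
    replace (2 * S J)%nat with (S (S (2 * J))) by lia.
    rewrite sum_n_C, sum_pair.
    specialize (HN1 J ltac:(lia)). specialize (HN2 (S (S (2 * J))) ltac:(lia)).
    apply tri_half; auto.
  - subst n. replace (2 * J + 1)%nat with (S (2 * J)) by lia. rewrite sum_pair.
    specialize (HN1 J ltac:(lia)). eapply Rlt_trans; [exact HN1|lra].
Qed.

Lemma sum_n_Re (u : nat -> C) n : Re (sum_n u n) = sum_n (fun k => Re (u k)) n.
Proof. induction n. now rewrite !sum_O. rewrite sum_n_C, sum_n_R, <- IHn. reflexivity. Qed.
Lemma sum_n_Im (u : nat -> C) n : Im (sum_n u n) = sum_n (fun k => Im (u k)) n.
Proof. induction n. now rewrite !sum_O. rewrite sum_n_C, sum_n_R, <- IHn. reflexivity. Qed.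

Lemma Re_minus (x y : C) : Re (x - y)%C = Re x - Re y.
Proof. destruct x, y; simpl; ring. Qed.
Lemma Im_minus (x y : C) : Im (x - y)%C = Im x - Im y.
Proof. destruct x, y; simpl; ring. Qed.

Lemma im_le_Cmod (c : C) : Rabs (Im c) <= Cmod c.
Proof. eapply Rle_trans; [apply Rmax_r|apply Rmax_Cmod]. Qed.

Lemma series_components (u : nat -> C) (l : C) :
  is_series u l -> is_series (fun k => Re (u k)) (Re l) /\ is_series (fun k => Im (u k)) (Im l).
Proof.
  intros H. split; unfold is_series; apply lim_R; intros eps Heps;
  destruct (proj1 (lim_C _ _) H eps Heps) as [N HN]; exists N; intros n Hn;
  specialize (HN n Hn).
  - rewrite <- sum_n_Re. eapply Rle_lt_trans; [|exact HN].
    eapply Rle_trans; [|apply re_le_Cmod]. rewrite Re_minus. right; reflexivity.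
  - rewrite <- sum_n_Im. eapply Rle_lt_trans; [|exact HN].
    eapply Rle_trans; [|apply im_le_Cmod]. rewrite Im_minus. right; reflexivity.
Qed.


Lemma sin_abs_pos (u : R) : 0 <= u -> Rabs (sin u) <= u.
Proof.
  intros Hu. destruct (Req_dec u 0) as [->|Hu0]. rewrite sin_0, Rabs_R0; lra.
  assert (Hs : sin u < u) by (apply sin_lt_x; lra).
  assert (Hl : - u <= sin u).
  { destruct (Rle_or_lt 1 u). pose proof (SIN_bound u); lra.
    assert (0 < sin u) by (apply sin_pos_tech; lra). lra. }
  apply Rabs_le; lra.
Qed.

Lemma sin_abs_le (u : R) : Rabs (sin u) <= Rabs u.
Proof.
  destruct (Rle_or_lt 0 u).
  - rewrite (Rabs_right u) by lra. now apply sin_abs_pos.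
  - rewrite (Rabs_left u) by lra.
    replace (sin u) with (- sin (-u)) by (rewrite sin_neg; ring). rewrite Rabs_Ropp.
    apply sin_abs_pos; lra.
Qed.

Lemma one_minus_cos (u : R) : 0 <= 1 - cos u <= Rabs u.
Proof.
  replace u with (2 * (u / 2)) by field. rewrite cos_2a_sin.
  pose proof (sin_abs_le (u/2)). pose proof (SIN_bound (u/2)).
  rewrite Rabs_mult, (Rabs_right 2) by lra.
  split. nra.
  assert (sin (u/2) * sin (u/2) <= Rabs (sin (u/2))).
  { destruct (Rle_or_lt 0 (sin (u/2))). rewrite Rabs_right; nra. rewrite Rabs_left; nra. }
  lra.
Qed.

Lemma Cmod_le_sum (z : C) : Cmod z <= Rabs (fst z) + Rabs (snd z).
Proof.
  destruct z as [p q]. unfold Cmod; simpl.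
  rewrite <- (sqrt_pow2 (Rabs p + Rabs q)) by (pose proof (Rabs_pos p); pose proof (Rabs_pos q); lra).
  apply sqrt_le_1_alt.
  pose proof (pow2_abs p). pose proof (pow2_abs q). pose proof (Rabs_pos p); pose proof (Rabs_pos q).
  nra.
Qed.

Lemma cpow_Cmod (x : R) (w : C) : 0 < x -> Cmod (cpow_pos x w) = Rpower x (Re w).
Proof.
  intros Hx. unfold cpow_pos, Cmod, Rpower. cbn [fst snd].
  set (e := exp (Re w * ln x)). set (t := Im w * ln x).
  replace ((e * cos t) ^ 2 + (e * sin t) ^ 2) with (e ^ 2).
  2: { pose proof (sin2_cos2 t). unfold Rsqr in *. nra. }
  rewrite sqrt_pow2. reflexivity. left; apply exp_pos.
Qed.

Lemma cpow_mult (x y : R) (w : C) : 0 < x -> 0 < y ->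
  (cpow_pos x w * cpow_pos y w)%C = cpow_pos (x * y) w.
Proof.
  intros Hx Hy. unfold cpow_pos. rewrite ln_mult by auto.
  rewrite !Rmult_plus_distr_l, exp_plus, cos_plus, sin_plus.
  apply injective_projections; simpl; ring.
Qed.

Lemma cpow_inv (x : R) (w : C) : 0 < x -> (cpow_pos x w * cpow_pos x (- w))%C = 1%C.
Proof.
  intros Hx. unfold cpow_pos, Re, Im. simpl.
  replace (- fst w * ln x) with (- (fst w * ln x)) by ring.
  replace (- snd w * ln x) with (- (snd w * ln x)) by ring.
  rewrite cos_neg, sin_neg, exp_Ropp.
  set (E := exp (fst w * ln x)). set (c := cos (snd w * ln x)). set (sn := sin (snd w * ln x)).
  assert (HE : E * / E = 1) by (apply Rinv_r; pose proof (exp_pos (fst w * ln x)); unfold E; lra).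
  pose proof (sin2_cos2 (snd w * ln x)) as Hsc. fold sn c in Hsc. unfold Rsqr in Hsc.
  apply injective_projections; simpl.
  - replace (E * c * (/ E * c) - E * sn * (/ E * - sn)) with ((E * / E) * (sn * sn + c * c)) by ring.
    rewrite HE, Hsc. ring.
  - replace (E * c * (/ E * - sn) + E * sn * (/ E * c)) with ((E * / E) * 0) by ring. ring.
Qed.

Lemma hurwitz_is_series (s : C) (al : R) : 0 < al -> 1 < Re s ->
  is_series (hurwitz_term s al) (hurwitz_zeta s al).
Proof.
  intros Hal Hs.
  assert (Hex : ex_series (hurwitz_term s al)).
  { apply (ex_series_le (V := C_CompleteNormedModule)) with (fun n => Rpower (INR n + al) (- Re s)).
    - intros n. unfold hurwitz_term. change (norm (cpow_pos (INR n + al) (- s)%C)) with (Cmod (cpow_pos (INR n + al) (- s)%C)).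
      rewrite cpow_Cmod. right; reflexivity. pose proof (pos_INR n); lra.
    - apply ex_series_pow; auto. }
  destruct Hex as [l Hl].
  destruct (series_components _ _ Hl) as [H1 H2].
  unfold hurwitz_zeta. rewrite (is_series_unique _ _ H1), (is_series_unique _ _ H2).
  destruct l; exact Hl.
Qed.

Lemma cpow_diff (x h : R) (s : C) : 0 < x -> 0 <= h -> 0 < Re s ->
  Cmod (cpow_pos x (- s) - cpow_pos (x + h) (- s))%C
   <= (Re s + 2 * Rabs (Im s)) * h * Rpower x (- Re s - 1).
Proof.
  intros Hx Hh Hs.
  set (y := 1 + h / x).
  assert (Hy : 1 <= y) by (unfold y; assert (0 <= h/x) by (apply Rdiv_le_0_compat; lra); lra).
  assert (Exy : x + h = x * y) by (unfold y; field; lra).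
  rewrite Exy, <- cpow_mult by lra.
  replace (cpow_pos x (- s) - cpow_pos x (- s) * cpow_pos y (- s))%C
    with (cpow_pos x (- s) * (1 - cpow_pos y (- s)))%C by ring.
  rewrite Cmod_mult, cpow_Cmod by lra.
  set (t := ln y).
  assert (Ht0 : 0 <= t) by (unfold t; rewrite <- ln_1; apply ln_le; lra).
  assert (Ht1 : t <= h / x).
  { unfold t, y. assert (0 <= h/x) by (apply Rdiv_le_0_compat; lra).
    apply Rle_trans with (ln (exp (h/x))); [|rewrite ln_exp; lra].
    apply ln_le. lra. pose proof (exp_ge_1p (h/x)); lra. }
  assert (Hb : Cmod (1 - cpow_pos y (- s))%C <= (Re s + 2 * Rabs (Im s)) * t).
  { eapply Rle_trans; [apply Cmod_le_sum|].
    unfold cpow_pos; simpl. fold t.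
    set (E := exp (- fst s * t)). set (ph := - snd s * t).
    assert (HE1 : E <= 1). { unfold E. rewrite <- exp_0. destruct (Req_dec t 0) as [->|].
      right; f_equal; ring. left; apply exp_increasing. unfold Re in Hs. nra. }
    assert (HE0 : 0 < E) by apply exp_pos.
    assert (HE2 : 1 - E <= fst s * t) by (unfold E; pose proof (exp_ge_1p (- fst s * t)); lra).
    pose proof (one_minus_cos ph). pose proof (sin_abs_le ph).
    assert (Hph : Rabs ph = Rabs (snd s) * t).
    { unfold ph. rewrite Rabs_mult, Rabs_Ropp, (Rabs_right t) by lra. reflexivity. }
    replace (1 + - (E * cos ph)) with ((1 - E) + E * (1 - cos ph)) by ring.
    rewrite (Rabs_right (1 - E + E * (1 - cos ph))) by nra.
    replace (0 + - (E * sin ph)) with (- (E * sin ph)) by ring.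
    rewrite Rabs_Ropp, Rabs_mult, (Rabs_right E) by lra.
    unfold Re, Im. pose proof (Rabs_pos (sin ph)). nra. }
  assert (Hc : 0 <= Re s + 2 * Rabs (Im s)) by (pose proof (Rabs_pos (Im s)); lra).
  replace (Rpower x (- Re s - 1)) with (Rpower x (- Re s) / x).
  2: { replace (- Re s - 1) with (- Re s + - (1)) by ring. rewrite Rpower_plus, (Rpower_Ropp x 1), Rpower_1 by lra.
       reflexivity. }
  pose proof (Rpower_pos x (- Re s)).
  assert ((Re s + 2 * Rabs (Im s)) * t <= (Re s + 2 * Rabs (Im s)) * (h / x)) by (apply Rmult_le_compat_l; auto).
  apply Rle_trans with (Rpower x (- Re s) * ((Re s + 2 * Rabs (Im s)) * (h / x))).
  apply Rmult_le_compat_l. lra. lra.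
  right. field. lra.
Qed.


Lemma is_series_mulr (u : nat -> R) (U c : R) :
  is_series u U -> is_series (fun n => u n * c) (U * c).
Proof.
  intros H. apply is_series_ext with (fun n => @scal R_AbsRing R_NormedModule c (u n)).
  intros n. unfold scal; simpl; unfold mult; simpl. ring.
  replace (U * c) with (@scal R_AbsRing R_NormedModule c U).
  now apply is_series_scal. unfold scal; simpl; unfold mult; simpl. ring.
Qed.

Lemma is_series_mull (u : nat -> R) (U c : R) :
  is_series u U -> is_series (fun n => c * u n) (c * U).
Proof.
  intros H. rewrite Rmult_comm.
  apply (is_series_ext (fun n => u n * c)). intros n; apply Rmult_comm.
  exact (is_series_mulr u U c H).
Qed.

Lemma Cmod_sym (x y : C) : Cmod (x - y) = Cmod (y - x).
Proof. replace (x - y)%C with (- (y - x))%C by ring. apply Cmod_opp. Qed.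

Lemma final_step (c d U V eps : R) : Rabs (d - U) < eps / (V + 1) -> d <= U -> 0 <= V ->
  c <= (U - d) * V -> 0 < eps -> c < eps.
Proof.
  intros H1 H2 H3 H4 H5. rewrite Rabs_left1 in H1 by lra.
  assert ((U - d) * V <= eps / (V + 1) * V) by (apply Rmult_le_compat_r; lra).
  assert (eps / (V + 1) * V < eps).
  { apply Rmult_lt_reg_r with (V + 1). lra. field_simplify; nra. }
  lra.
Qed.

Lemma fubini (g : nat -> nat -> C) (u v : nat -> R) (A B : nat -> C) (U V : R) :
  (forall n, 0 <= u n) -> (forall j, 0 <= v j) -> is_series u U -> is_series v V ->
  (forall j n, Cmod (g j n) <= u n * v j) ->
  (forall j, is_series (g j) (A j)) -> (forall n, is_series (fun j => g j n) (B n)) ->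
  exists T, is_series A T /\ is_series B T.
Proof.
  intros Hu Hv HU HV Hg HA HB.
  assert (HAb : forall j, Cmod (A j) <= U * v j).
  { intros j. apply snorm_C with (g j) (fun n => u n * v j); auto.
    now apply is_series_mulr. }
  assert (HexA : ex_series A).
  { apply (ex_series_le (V := C_CompleteNormedModule)) with (fun j => U * v j).
    intros j; apply HAb. exists (U * V). now apply is_series_mull. }
  destruct HexA as [T HT]. exists T. split; auto.
  assert (Hfin : forall N, is_series (fun j => sum_n (g j) N) (sum_n B N)).
  { induction N.
    - apply is_series_ext with (fun j => g j 0%nat). intros; now rewrite sum_O.
      rewrite sum_O. apply HB.
    - apply is_series_ext with (fun j => plus (sum_n (g j) N) (g j (S N))).
      intros j. now rewrite sum_Sn.
      rewrite sum_Sn. exact (@is_series_plus C_AbsRing C_NormedModule _ _ _ _ IHN (HB (S N))). }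
  assert (Htail : forall N j, Cmod (A j - sum_n (g j) N) <= (U - sum_n u N) * v j).
  { intros N j. apply lim_C_le with (sum_n (g j)). apply HA.
    exists N. intros M HM.
    assert (Hind : Cmod (sum_n (g j) M - sum_n (g j) N) <= (sum_n u M - sum_n u N) * v j).
    { induction HM.
      - replace (sum_n (g j) N - sum_n (g j) N)%C with (RtoC 0) by ring.
        rewrite Cmod_0. lra.
      - rewrite sum_n_C, sum_n_R.
        replace (sum_n (g j) m + g j (S m) - sum_n (g j) N)%C
          with ((sum_n (g j) m - sum_n (g j) N) + g j (S m))%C by ring.
        eapply Rle_trans; [apply Cmod_triangle|].
        specialize (Hg j (S m)). lra. }
    eapply Rle_trans; [exact Hind|]. apply Rmult_le_compat_r; auto.
    pose proof (partial_le u U M Hu HU). lra. }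
  assert (Hser : forall N, is_series (fun j => A j - sum_n (g j) N)%C (T - sum_n B N)%C).
  { intros N. apply (is_series_minus A (fun j => sum_n (g j) N) T (sum_n B N) HT (Hfin N)). }
  assert (Hbound : forall N, Cmod (T - sum_n B N) <= (U - sum_n u N) * V).
  { intros N. apply snorm_C with (fun j => A j - sum_n (g j) N)%C (fun j => (U - sum_n u N) * v j).
    apply Hser. now apply is_series_mull. intros j. apply Htail. }
  unfold is_series. apply lim_C. intros eps Heps.
  assert (HV0 : 0 <= V) by (apply series_ge0 with v; auto).
  destruct (proj1 (lim_R _ _) HU (eps / (V + 1))) as [N0 HN0].
  apply Rdiv_lt_0_compat; lra.
  exists N0. intros N HN. specialize (HN0 N HN). specialize (Hbound N).
  rewrite Cmod_sym.
  pose proof (partial_le u U N Hu HU).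
  eapply final_step; [exact HN0|exact H|exact HV0|exact Hbound|exact Heps].
Qed.


Lemma pow_to_0 (a b d e : R) : 0 < a -> 0 < b -> 0 < d -> 0 < e ->
  exists N, forall m, (N <= m)%nat -> Rpower (INR m * a + b) (- d) < e.
Proof.
  intros Ha Hb Hd He.
  set (X := exp (- ln e / d)).
  destruct (INR_unbounded (X / a)) as [N HN]. exists N. intros m Hm.
  apply le_INR in Hm.
  assert (HX : X < INR m * a + b).
  { assert (X / a * a = X) by (field; lra).
    assert (INR N * a <= INR m * a) by (apply Rmult_le_compat_r; lra).
    assert (X / a * a < INR N * a) by (apply Rmult_lt_compat_r; lra). lra. }
  assert (Hl : - ln e / d < ln (INR m * a + b)).
  { rewrite <- (ln_exp (- ln e / d)). apply ln_increasing. apply exp_pos. exact HX. }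
  unfold Rpower. rewrite <- (exp_ln e) by lra. apply exp_increasing.
  apply Rmult_lt_compat_l with (r := d) in Hl; auto.
  replace (d * (- ln e / d)) with (- ln e) in Hl by (field; lra). lra.
Qed.

Lemma scal_cpow (x y1 y2 r1 r2 : R) (w : C) : 0 < x -> 0 < y1 -> 0 < y2 ->
  r1 = x * y1 -> r2 = x * y2 ->
  @scal C_AbsRing C_NormedModule (cpow_pos x w) (plus (cpow_pos y1 w) (opp (cpow_pos y2 w)))
   = (cpow_pos r1 w - cpow_pos r2 w)%C.
Proof.
  intros Hx H1 H2 E1 E2.
  change (cpow_pos x w * (cpow_pos y1 w + - cpow_pos y2 w) = cpow_pos r1 w - cpow_pos r2 w)%C.
  subst. rewrite <- !cpow_mult by auto. ring.
Qed.

Lemma pm_one (x y : C) : (x - y)%C = (RtoC 1 * x + RtoC (-1) * y)%C.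
Proof. destruct x, y. apply injective_projections; simpl; ring. Qed.

Lemma small_step (z U w eps : R) : z <= U * w -> w < eps / (U + 1) -> 0 <= U -> 0 < eps ->
  0 <= w -> z < eps.
Proof.
  intros H1 H2 H3 H4 H5.
  assert (U * w <= U * (eps / (U + 1))) by (apply Rmult_le_compat_l; lra).
  assert (U * (eps / (U + 1)) < eps).
  { apply Rmult_lt_reg_r with (U + 1). lra. field_simplify; nra. }
  lra.
Qed.

Theorem mainTheorem13 (a b : R) (s : C) :
  0 < a -> 0 < b -> 1 < Re s ->
  exists L Rs : C,
    is_series (fun k : nat => Cmult (RtoC ((-1) ^ k)) (hurwitz_zeta s (INR k * a + b))) L /\
    is_series (fun n : nat =>
      Cminus (hurwitz_zeta s ((INR n + b) / (2 * a)))
             (hurwitz_zeta s ((INR n + b) / (2 * a) + 1 / 2))) Rs /\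
    L = Cmult (cpow_pos (2 * a) (Copp s)) Rs.
Proof.
  intros Ha Hb Hs.
  set (sg := Re s). set (dl := (sg - 1) / 2).
  assert (Hdl : 0 < dl) by (unfold dl, sg; lra).
  set (Tf := fun x => cpow_pos x (- s)%C).
  set (Z := fun m => hurwitz_zeta s (INR m * a + b)).
  assert (HZ : forall m, is_series (fun n => Tf (INR n + (INR m * a + b))) (Z m)).
  { intros m. apply (hurwitz_is_series s (INR m * a + b)); auto.
    pose proof (pos_INR m). nra. }
  set (g := fun j n => Cminus (Tf (INR n + (INR (2 * j) * a + b))) (Tf (INR n + (INR (S (2 * j)) * a + b)))).
  set (Af := fun j => Cminus (Z (2 * j)%nat) (Z (S (2 * j)))).
  assert (HA : forall j, is_series (g j) (Af j)).
  { intros j. exact (is_series_minus _ _ _ _ (HZ (2 * j)%nat) (HZ (S (2 * j)))). }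
  set (K := (sg + 2 * Rabs (Im s)) * a).
  assert (HK : 0 <= K) by (unfold K; pose proof (Rabs_pos (Im s)); unfold sg in *; nra).
  set (u := fun n => K * Rpower (INR n + b) (- (1 + dl))).
  set (v := fun j => Rpower (INR j * (2 * a) + b) (- (sg - dl))).
  assert (Hu : forall n, 0 <= u n) by (intros n; unfold u; pose proof (Rpower_pos (INR n + b) (- (1 + dl))); nra).
  assert (Hv : forall j, 0 <= v j) by (intros j; unfold v; left; apply Rpower_pos).
  destruct (ex_series_pow b (1 + dl)) as [U1 HU1]; auto. lra.
  assert (HU : is_series u (K * U1)) by (exact (is_series_mull _ _ K HU1)).
  destruct (ex_series_pow_lin (2 * a) b (sg - dl)) as [V HV]; auto. lra. unfold dl, sg in *; lra.
  assert (Hg : forall j n, Cmod (g j n) <= u n * v j).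
  { intros j n. unfold g, Tf.
    assert (Hx : 0 < INR n + (INR (2 * j) * a + b)).
    { pose proof (pos_INR n); pose proof (pos_INR (2 * j)). nra. }
    replace (INR n + (INR (S (2 * j)) * a + b)) with (INR n + (INR (2 * j) * a + b) + a)
      by (rewrite S_INR; ring).
    eapply Rle_trans; [apply cpow_diff; auto; lra|].
    fold sg. unfold u, v. fold K.
    replace (- sg - 1) with (- ((1 + dl) + (sg - dl))) by ring.
    rewrite Rmult_assoc. apply Rmult_le_compat_l; auto.
    apply Rpower_split; try (unfold dl, sg in *; lra).
    - pose proof (pos_INR n); lra.
    - pose proof (pos_INR j); nra.
    - pose proof (pos_INR (2 * j)); nra.
    - rewrite mult_INR. simpl (INR 2). pose proof (pos_INR n); nra. }
  set (c0 := cpow_pos (2 * a) (- s)%C).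
  set (D := fun n => Cminus (hurwitz_zeta s ((INR n + b) / (2 * a)))
             (hurwitz_zeta s ((INR n + b) / (2 * a) + 1 / 2))).
  set (Bf := fun n => Cmult c0 (D n)).
  assert (HB : forall n, is_series (fun j => g j n) (Bf n)).
  { intros n.
    assert (Hy : 0 < (INR n + b) / (2 * a)).
    { apply Rdiv_lt_0_compat; [pose proof (pos_INR n)|]; lra. }
    pose proof (is_series_minus _ _ _ _ (hurwitz_is_series s _ Hy Hs)
                  (hurwitz_is_series s ((INR n + b) / (2 * a) + 1 / 2) ltac:(lra) Hs)) as H1.
    pose proof (@is_series_scal C_AbsRing C_NormedModule c0 _ _ H1) as H2.
    apply (is_series_ext _ _ _ ) with (2 := H2).
    intros j. unfold g, Tf, c0, hurwitz_term.
    pose proof (pos_INR j).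
    apply scal_cpow; try lra.
    - rewrite mult_INR. simpl (INR 2). field. lra.
    - rewrite S_INR, mult_INR. simpl (INR 2). field. lra. }
  destruct (fubini g u v Af Bf (K * U1) V Hu Hv HU HV Hg HA HB) as [T0 [HT1 HT2]].
  set (c1 := cpow_pos (2 * a) s).
  assert (Hinv : (c1 * c0)%C = 1%C) by (apply cpow_inv; lra).
  exists T0, (c1 * T0)%C. split; [|split].
  - apply pairing.
    + apply (is_series_ext _ _ _) with (2 := HT1).
      intros j. unfold Af, Z. rewrite pow_1_even, pow_1_odd. apply pm_one.
    + apply lim_C. intros eps Heps.
      assert (HU1p : 0 <= U1).
      { apply series_ge0 with (fun n => Rpower (INR n + b) (- (1 + dl))); auto.
        intros; left; apply Rpower_pos. }
      assert (HZb : forall m, Cmod (Z m) <= U1 * Rpower (INR m * a + b) (- dl)).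
      { intros m. apply snorm_C with (fun n => Tf (INR n + (INR m * a + b)))
          (fun n => Rpower (INR n + b) (- (1 + dl)) * Rpower (INR m * a + b) (- dl)).
        apply HZ. apply is_series_mulr; auto.
        intros n. unfold Tf. rewrite cpow_Cmod.
        2: { pose proof (pos_INR n); pose proof (pos_INR m). nra. }
        replace (Re (- s)%C) with (- ((1 + dl) + dl)) by (unfold dl, sg, Re; simpl; field).
        apply Rpower_split; try lra.
        - pose proof (pos_INR n); lra.
        - pose proof (pos_INR m); nra.
        - pose proof (pos_INR m); nra.
        - pose proof (pos_INR n); lra. }
      destruct (pow_to_0 a b dl (eps / (U1 + 1))) as [N HN]; auto.
      apply Rdiv_lt_0_compat; lra.
      exists N. intros m Hm. rewrite Cminus0, Cmod_mult, Cmod_R, pow_1_abs, Rmult_1_l.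
      specialize (HN m Hm). specialize (HZb m).
      apply (small_step _ U1 (Rpower (INR m * a + b) (- dl)) eps); auto. left; apply Rpower_pos.
  - pose proof (@is_series_scal C_AbsRing C_NormedModule c1 _ _ HT2) as H3.
    apply (is_series_ext _ _ _) with (2 := H3).
    intros n. unfold Bf. change (c1 * (c0 * D n) = D n)%C.
    rewrite Cmult_assoc, Hinv. apply Cmult_1_l.
  - change (T0 = c0 * (c1 * T0))%C. rewrite Cmult_assoc, (Cmult_comm c0 c1), Hinv.
    symmetry; apply Cmult_1_l.
Qed.
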